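(* Assume Hypotheses 1, 2 and 3 (see context). For any $x\in\Gamma$ and any $\mathbf{x}\in T(x)$, $$\|Q(t,x)\mathbf{x}\|\le 2\|\mathbf{x}\|\exp\Big(\int_0^t\big(\|D_ag(\Phi(s,x))\|+\ell(\Phi(s,x))\big)\,ds\Big)\quad\text{for all }t\ge0.$$
   Context: System $\dot x=F(x)$ with $F=(f,g)$, i.e. $\dot a=f(a,z)$, $\dot z=g(a,z)$, $(a,z)\in\mathbb{R}^n\times\mathbb{R}^m$, $X=\mathbb{R}^n\times\mathbb{R}^m$, flow $\Phi(t,x)$. Euclidean inner product, norm, operator norm. $\mathcal{L}(x_1,x_2)=\|a_2-a_1\|^2-\|z_2-z_1\|^2$, $\mathcal{C}(x)=\{x'\in X:\mathcal{L}(x',x)\ge0\}$, $\mathbf{0}$ the zero vector of $X$; $\Pi(a,z)=a$, $\Pi_\perp(a,z)=z$; $\mathbb{B}_d(x)=\{(a',z'):\|a'-a\|\le d,\|z'-z\|\le d\}$. $\Gamma\subseteq U$ positively invariant means $\Phi(t,x)$ is defined for all $t\ge0$ for $x\in\Gamma$ and $\Phi(t,\Gamma)\subseteq\Gamma$. Hypothesis 1: $U$ open and convex, and there is $d>0$ with $\mathcal{C}(x)\cap U\subset\mathbb{B}_d(x)$ for all $x\in U$. Hypothesis 2: $f,g$ are $C^1$ on $U$; there exist continuous $\alpha>0$, $\ell\ge0$ on $U$ and $c_1>0$ with, for all $x\in U$: $\langle a',D_af(x)a'\rangle\ge\alpha(x)\|a'\|^2$; $\langle z',D_zg(x)z'\rangle\le\ell(x)\|z'\|^2$;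 $\alpha(x)\ge\ell(x)+\|D_zf(x)\|+\|D_ag(x)\|+c_1$. Hypothesis 3: $\Gamma\subset U$ is positively invariant and $\Pi_\perp(\Gamma)=\Pi_\perp(U)$. For $x\in\Gamma$, $Q(t,x)$ ($t\ge0$) denotes the fundamental matrix solution of the variational equation $\dot{\mathbf{x}}=DF(\Phi(t,x))\mathbf{x}$ with $Q(0,x)=I$. For $x\in\Gamma$, $T(x):=\{\mathbf{x}\in X: \mathcal{L}(Q(t,x)\mathbf{x},\mathbf{0})\le0\text{ for all }t\ge0\}$, i.e. the set of $\mathbf{x}$ with $Q(t,x)\mathbf{x}\notin\operatorname{int}\mathcal{C}(\mathbf{0})$ for all $t\ge0$. *)

(* Defs.v *)
From Stdlib Require Import Reals Lra ClassicalEpsilon.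
Open Scope R_scope.

(* Points of R^k are represented as functions nat -> R; only the indices
   i < k are meaningful.  A point of X = R^n x R^m is a vector of length
   N = n + m whose first n coordinates form a and the next m form z. *)
Definition vec := nat -> R.
Definition mat := nat -> nat -> R.

Fixpoint sumR (k : nat) (f : nat -> R) : R :=
  match k with O => 0 | S k' => sumR k' f + f k' end.

Definition ip (k : nat) (u v : vec) : R := sumR k (fun i => u i * v i).
Definition norm (k : nat) (u : vec) : R := sqrt (ip k u u).

Definition vadd (u v : vec) : vec := fun i => u i + v i.
Definition vsub (u v : vec) : vec := fun i => u i - v i.
Definition vscal (c : R) (u : vec) : vec := fun i => c * u i.

Definition matvec (q : nat) (A : mat) (v : vec) : vec :=
  fun i => sumR q (fun j => A i j * v j).
Definition matmul (q : nat) (A B : mat) : mat :=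
  fun i j => sumR q (fun k => A i k * B k j).

Definition opnorm (p q : nat) (A : mat) : R :=
  epsilon (inhabits 0)
    (fun r => is_lub (fun y => exists v, norm q v <= 1 /\ y = norm p (matvec q A v)) r).

Definition proj_a (x : vec) : vec := x.                   (* use with dim n *)
Definition proj_z (n : nat) (x : vec) : vec := fun i => x (n + i)%nat. (* dim m *)

Definition Lf (n m : nat) (x1 x2 : vec) : R :=
  (norm n (proj_a (vsub x2 x1)))^2 - (norm m (proj_z n (vsub x2 x1)))^2.

Definition Ccone (n m : nat) (x x' : vec) : Prop := Lf n m x' x >= 0.

Definition Bd (n m : nat) (d : R) (x x' : vec) : Prop :=
  norm n (proj_a (vsub x' x)) <= d /\ norm m (proj_z n (vsub x' x)) <= d.

Definition zero_vec : vec := fun _ => 0.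

Definition is_open (N : nat) (U : vec -> Prop) : Prop :=
  forall x, U x -> exists eps, eps > 0 /\
    forall y, norm N (vsub y x) < eps -> U y.

Definition is_convex (U : vec -> Prop) : Prop :=
  forall x y lam, U x -> U y -> 0 <= lam <= 1 ->
    U (vadd (vscal lam x) (vscal (1 - lam) y)).

Definition cont_on (N : nat) (U : vec -> Prop) (h : vec -> R) : Prop :=
  forall x, U x -> forall eps, eps > 0 -> exists delta, delta > 0 /\
    forall y, U y -> norm N (vsub y x) < delta -> Rabs (h y - h x) < eps.

Definition frechet_on (N : nat) (U : vec -> Prop) (F : vec -> vec) (DF : vec -> mat) : Prop :=
  forall x, U x -> forall eps, eps > 0 -> exists delta, delta > 0 /\
    forall h, norm N h < delta ->
      norm N (vsub (vsub (F (vadd x h)) (F x)) (matvec N (DF x) h)) <= eps * norm N h.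

Definition Daf (DF : vec -> mat) (x : vec) : mat := fun i j => DF x i j.
Definition Dzf (n : nat) (DF : vec -> mat) (x : vec) : mat := fun i j => DF x i (n + j)%nat.
Definition Dag (n : nat) (DF : vec -> mat) (x : vec) : mat := fun i j => DF x (n + i)%nat j.
Definition Dzg (n : nat) (DF : vec -> mat) (x : vec) : mat :=
  fun i j => DF x (n + i)%nat (n + j)%nat.

(* Main.v *)
Require Import Defs.
From Stdlib Require Import Reals Lra Lia Psatz ClassicalEpsilon.
Open Scope R_scope.

Lemma sumR_ext k f g : (forall i, (i<k)%nat -> f i = g i) -> sumR k f = sumR k g.
Proof. induction k; simpl; intros H; auto. rewrite IHk by (intros; apply H; lia). rewrite H by lia. auto. Qed.
Lemma sumR_plus k f g : sumR k (fun i => f i + g i) = sumR k f + sumR k g.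
Proof. induction k; simpl; [lra|]. rewrite IHk. lra. Qed.
Lemma sumR_minus k f g : sumR k (fun i => f i - g i) = sumR k f - sumR k g.
Proof. induction k; simpl; [lra|]. rewrite IHk. lra. Qed.
Lemma sumR_scal k c f : sumR k (fun i => c * f i) = c * sumR k f.
Proof. induction k; simpl; [lra|]. rewrite IHk. lra. Qed.
Lemma sumR_0 k : sumR k (fun _ => 0) = 0.
Proof. induction k; simpl; lra. Qed.
Lemma sumR_le k f g : (forall i, (i<k)%nat -> f i <= g i) -> sumR k f <= sumR k g.
Proof. induction k; simpl; intros H; [lra|]. assert (f k <= g k) by (apply H; lia).
 assert (sumR k f <= sumR k g) by (apply IHk; intros; apply H; lia). lra. Qed.
Lemma sumR_nonneg k f : (forall i, (i<k)%nat -> 0 <= f i) -> 0 <= sumR k f.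
Proof. intros H. rewrite <- (sumR_0 k). apply sumR_le. auto. Qed.
Lemma sumR_split n m f : sumR (n+m) f = sumR n f + sumR m (fun i => f (n+i)%nat).
Proof. induction m; simpl. rewrite Nat.add_0_r; lra. rewrite Nat.add_succ_r. simpl. rewrite IHm. lra. Qed.
Lemma sumR_swap p q f : sumR p (fun i => sumR q (fun j => f i j)) = sumR q (fun j => sumR p (fun i => f i j)).
Proof. induction p; simpl. rewrite sumR_0; auto. rewrite IHp. rewrite <- sumR_plus. auto. Qed.
Lemma sumR_delta k a v : (a<k)%nat -> sumR k (fun j => (if Nat.eqb a j then 1 else 0) * v j) = v a.
Proof. induction k; intros H; [lia|]. simpl. destruct (Nat.eqb_spec a k).
 - subst. rewrite (sumR_ext _ _ (fun _ => 0)). rewrite sumR_0; lra.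
   intros i Hi. destruct (Nat.eqb_spec k i); [lia|]. lra.
 - rewrite IHk by lia. lra. Qed.
Lemma sumR_zero_all k f: (forall i, (i<k)%nat -> 0<= f i) -> sumR k f = 0 -> forall i, (i<k)%nat -> f i = 0.
Proof. induction k; simpl; intros H1 H2 i Hi; [lia|].
 assert (0 <= sumR k f) by (apply sumR_nonneg; intros; apply H1; lia).
 assert (0 <= f k) by (apply H1; lia).
 destruct (Nat.eq_dec i k). subst; lra. apply IHk; try lra; try lia. intros; apply H1; lia. Qed.

Lemma ip_nonneg k u : 0 <= ip k u u.
Proof. unfold ip. apply sumR_nonneg. intros. nra. Qed.
Lemma norm_nonneg k u : 0 <= norm k u.
Proof. apply sqrt_pos. Qed.
Lemma norm_sq k u : norm k u ^ 2 = ip k u u.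
Proof. unfold norm. apply pow2_sqrt, ip_nonneg. Qed.
Lemma ip_sym k u v : ip k u v = ip k v u.
Proof. unfold ip. apply sumR_ext; intros; ring. Qed.

Lemma ip_quad k u v l : ip k (fun i => u i + l * v i) (fun i => u i + l * v i)
  = ip k u u + 2 * l * ip k u v + l^2 * ip k v v.
Proof. unfold ip. rewrite <- !sumR_scal, <- !sumR_plus. apply sumR_ext; intros; ring. Qed.

Lemma CS2 k u v : (ip k u v)^2 <= ip k u u * ip k v v.
Proof.
  assert (Hu := ip_nonneg k u). assert (Hv := ip_nonneg k v).
  destruct (Req_dec (ip k v v) 0) as [E|E].
  - destruct (Req_dec (ip k u v) 0) as [E2|E2]. rewrite E2; nra.
    exfalso. set (l := - (ip k u u + 1) / (2 * ip k u v)).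
    assert (H := ip_nonneg k (fun i => u i + l * v i)). rewrite ip_quad, E in H.
    assert (2 * l * ip k u v = - (ip k u u + 1)) by (unfold l; field; auto). nra.
  - set (l := - ip k u v / ip k v v).
    assert (H := ip_nonneg k (fun i => u i + l * v i)). rewrite ip_quad in H.
    assert (Hp : ip k v v > 0) by lra.
    assert (2 * l * ip k u v + l^2 * ip k v v = - (ip k u v)^2 / ip k v v) by (unfold l; field; auto).
    assert ((ip k u v)^2 / ip k v v <= ip k u u) by lra.
    apply Rmult_le_reg_r with (/ ip k v v). apply Rinv_0_lt_compat; lra.
    replace (ip k u u * ip k v v * / ip k v v) with (ip k u u) by (field; lra). lra.
Qed.

Lemma CS k u v : ip k u v <= norm k u * norm k v.
Proof.
  unfold norm. rewrite <- sqrt_mult by apply ip_nonneg.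
  apply Rle_trans with (Rabs (ip k u v)). apply Rle_abs.
  rewrite <- (sqrt_pow2 (Rabs (ip k u v))) by apply Rabs_pos. apply sqrt_le_1_alt.
  replace (Rabs (ip k u v) ^ 2) with (ip k u v ^ 2) by (unfold Rabs; destruct Rcase_abs; ring). apply CS2.
Qed.

Lemma norm_triangle k u w : norm k (fun i => u i + w i) <= norm k u + norm k w.
Proof.
  assert (H := CS k u w). assert (Hu := norm_sq k u). assert (Hw := norm_sq k w).
  assert (E : ip k (fun i => u i + w i) (fun i => u i + w i) = ip k u u + 2 * ip k u w + ip k w w).
  { unfold ip. rewrite <- sumR_scal, <- !sumR_plus. apply sumR_ext; intros; ring. }
  unfold norm at 1. rewrite <- (sqrt_pow2 (norm k u + norm k w)) by (pose proof (norm_nonneg k u); pose proof (norm_nonneg k w); lra).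
  apply sqrt_le_1_alt. rewrite E. nra.
Qed.

Lemma norm_ext k u w : (forall i, (i<k)%nat -> u i = w i) -> norm k u = norm k w.
Proof. intros H. unfold norm, ip. f_equal. apply sumR_ext. intros; rewrite H; auto. Qed.

Definition frob p q (A : mat) := sqrt (sumR p (fun i => sumR q (fun j => (A i j)^2))).
Definition dfrob p q (A B : mat) := frob p q (fun i j => A i j - B i j).

Lemma frob_nonneg p q A : 0 <= frob p q A.
Proof. apply sqrt_pos. Qed.

Lemma matvec_frob p q A v : norm p (matvec q A v) <= frob p q A * norm q v.
Proof.
  unfold norm, frob. rewrite <- sqrt_mult.
  2:{ apply sumR_nonneg; intros; apply sumR_nonneg; intros; nra. }
  2:{ apply ip_nonneg. }
  apply sqrt_le_1_alt.
  apply Rle_trans with (sumR p (fun i => ip q (A i) (A i) * ip q v v)).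
  - unfold ip at 1. apply sumR_le. intros i Hi.
    change (matvec q A v i) with (ip q (A i) v). pose proof (CS2 q (A i) v). nra.
  - right. rewrite Rmult_comm, <- sumR_scal. apply sumR_ext. intros i Hi.
    rewrite Rmult_comm. f_equal. unfold ip. apply sumR_ext. intros; ring.
Qed.

Lemma norm_zero_vec k : norm k zero_vec = 0.
Proof. unfold norm, ip, zero_vec. rewrite (sumR_ext _ _ (fun _ => 0)) by (intros; ring).
  rewrite sumR_0. apply sqrt_0. Qed.

Definition opset p q A := fun y => exists v, norm q v <= 1 /\ y = norm p (matvec q A v).

Lemma opnorm_lub p q A : is_lub (opset p q A) (opnorm p q A).
Proof.
  unfold opnorm. apply epsilon_spec.
  destruct (completeness (opset p q A)) as [l Hl].
  - exists (frob p q A). intros y [v [Hv ->]]. eapply Rle_trans; [apply matvec_frob|].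
    pose proof (frob_nonneg p q A). pose proof (norm_nonneg q v). nra.
  - exists (norm p (matvec q A zero_vec)), zero_vec. rewrite norm_zero_vec. split; [lra|auto].
  - exists l; exact Hl.
Qed.

Lemma opnorm_nonneg p q A : 0 <= opnorm p q A.
Proof.
  destruct (opnorm_lub p q A) as [H _].
  apply Rle_trans with (norm p (matvec q A zero_vec)). apply norm_nonneg.
  apply H. exists zero_vec. rewrite norm_zero_vec. split; [lra|auto].
Qed.

Lemma norm_zero_comp k v : norm k v = 0 -> forall j, (j<k)%nat -> v j = 0.
Proof.
  intros H j Hj. unfold norm in H. apply sqrt_eq_0 in H; [|apply ip_nonneg].
  assert (v j * v j = 0). { apply (sumR_zero_all k (fun i => v i * v i)); auto. intros; nra. }
  nra.
Qed.

Lemma opnorm_bound p q A v : norm p (matvec q A v) <= opnorm p q A * norm q v.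
Proof.
  pose proof (opnorm_nonneg p q A). pose proof (norm_nonneg q v).
  destruct (Req_dec (norm q v) 0) as [E|E].
  - rewrite E, (norm_ext p _ zero_vec). rewrite norm_zero_vec; lra.
    intros i Hi. unfold matvec, zero_vec. rewrite (sumR_ext _ _ (fun _ => 0)). apply sumR_0.
    intros j Hj. rewrite (norm_zero_comp q v E j Hj). ring.
  - set (r := norm q v). assert (Hr : r > 0) by (unfold r; lra).
    assert (Hw : norm q (vscal (/r) v) = 1).
    { unfold norm, ip, vscal. rewrite (sumR_ext _ _ (fun i => (/r)^2 * (v i * v i))) by (intros; ring).
      rewrite sumR_scal, sqrt_mult. rewrite sqrt_pow2. fold (ip q v v). fold (norm q v). fold r. field. lra.
      left; apply Rinv_0_lt_compat; lra. apply pow2_ge_0. apply ip_nonneg. }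
    assert (Hb : norm p (matvec q A (vscal (/r) v)) <= opnorm p q A).
    { apply (proj1 (opnorm_lub p q A)). exists (vscal (/r) v). split; [lra|auto]. }
    assert (Hm : norm p (matvec q A (vscal (/r) v)) = /r * norm p (matvec q A v)).
    { rewrite (norm_ext p _ (vscal (/r) (matvec q A v))).
      unfold norm, ip, vscal. rewrite (sumR_ext _ _ (fun i => (/r)^2 * (matvec q A v i * matvec q A v i))) by (intros; ring).
      rewrite sumR_scal, sqrt_mult. rewrite sqrt_pow2. auto.
      left; apply Rinv_0_lt_compat; lra. apply pow2_ge_0. apply ip_nonneg.
      intros i Hi. unfold matvec, vscal. rewrite <- sumR_scal. apply sumR_ext. intros; ring. }
    rewrite Hm in Hb. apply Rmult_le_compat_l with (r := r) in Hb; [|lra].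
    replace (r * (/ r * norm p (matvec q A v))) with (norm p (matvec q A v)) in Hb by (field; lra).
    fold r. lra.
Qed.

Lemma opnorm_lip p q A B : opnorm p q A <= opnorm p q B + dfrob p q A B.
Proof.
  apply (proj2 (opnorm_lub p q A)). intros y [v [Hv ->]].
  rewrite (norm_ext p _ (fun i => matvec q B v i + matvec q (fun i j => A i j - B i j) v i)).
  2:{ intros i Hi. unfold matvec. rewrite <- sumR_plus. apply sumR_ext; intros; ring. }
  eapply Rle_trans. apply norm_triangle.
  pose proof (opnorm_bound p q B v). pose proof (matvec_frob p q (fun i j => A i j - B i j) v).
  pose proof (opnorm_nonneg p q B). pose proof (frob_nonneg p q (fun i j => A i j - B i j)).
  pose proof (norm_nonneg q v). unfold dfrob. nra.
Qed.

Lemma dfrob_sym p q A B : dfrob p q A B = dfrob p q B A.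
Proof. unfold dfrob, frob. f_equal. apply sumR_ext; intros; apply sumR_ext; intros; ring. Qed.

Lemma cont_sumR k (f : nat -> R -> R) s0 : (forall i, (i<k)%nat -> continuity_pt (f i) s0) ->
  continuity_pt (fun s => sumR k (fun i => f i s)) s0.
Proof. induction k; simpl; intros H.
 - apply continuity_pt_const. intros a b; auto.
 - exact (continuity_pt_plus _ _ _ (IHk (fun i Hi => H i ltac:(lia))) (H k ltac:(lia))).
Qed.

Lemma cont_bound (g phi : R -> R) s0 : continuity_pt phi s0 -> phi s0 = 0 ->
  (forall s, Rabs (g s - g s0) <= phi s) -> continuity_pt g s0.
Proof.
  unfold continuity_pt, continue_in, limit1_in, limit_in. intros H H0 Hb eps Heps.
  destruct (H eps Heps) as [a [Ha Hx]]. exists a. split; auto. intros x Hxx.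
  specialize (Hx x Hxx). simpl in *. unfold R_dist in *. rewrite H0 in Hx.
  specialize (Hb x). rewrite Rminus_0_r in Hx. pose proof (Rle_abs (phi x)). lra.
Qed.

Lemma cont_sq_diff (f : R -> R) s0 : continuity_pt f s0 ->
  continuity_pt (fun s => (f s - f s0) * (f s - f s0)) s0.
Proof. intros H.
  assert (H1 : continuity_pt (fun s => f s - f s0) s0).
  { exact (continuity_pt_minus _ _ _ H (continuity_pt_const (fun _ => f s0) s0 (fun a b => eq_refl))). }
  exact (continuity_pt_mult _ _ _ H1 H1).
Qed.

Lemma cont_sqrt_comp (f : R -> R) s0 : continuity_pt f s0 -> 0 <= f s0 ->
  continuity_pt (fun s => sqrt (f s)) s0.
Proof. intros H H0. exact (continuity_pt_comp f sqrt s0 H (continuity_pt_sqrt _ H0)). Qed.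

Lemma cont_comp_vec N U h (P : R -> vec) s0 : (forall s, U (P s)) ->
  (forall i, (i<N)%nat -> continuity_pt (fun s => P s i) s0) -> cont_on N U h ->
  continuity_pt (fun s => h (P s)) s0.
Proof.
  intros HU HP Hh.
  assert (HD : continuity_pt (fun s => norm N (vsub (P s) (P s0))) s0).
  { unfold norm, ip, vsub. apply cont_sqrt_comp.
    apply (cont_sumR N (fun i s => (P s i - P s0 i) * (P s i - P s0 i))).
    intros i Hi. apply (cont_sq_diff (fun s => P s i)); auto.
    apply sumR_nonneg; intros; nra. }
  assert (HD0 : norm N (vsub (P s0) (P s0)) = 0).
  { rewrite (norm_ext _ _ zero_vec). apply norm_zero_vec. intros; unfold vsub, zero_vec; ring. }
  unfold continuity_pt, continue_in, limit1_in, limit_in in *. intros eps Heps.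
  destruct (Hh (P s0) (HU s0) eps Heps) as [d [Hd Hd2]].
  destruct (HD d Hd) as [a [Ha Hx]]. exists a. split; auto. intros x Hxx.
  specialize (Hx x Hxx). simpl in *. unfold R_dist in *. rewrite HD0, Rminus_0_r in Hx.
  apply Hd2. apply HU. pose proof (Rle_abs (norm N (vsub (P x) (P s0)))). lra.
Qed.

Lemma cont_Rmax0 s0 : continuity_pt (fun s => Rmax 0 s) s0.
Proof.
  apply (cont_bound _ (fun s => Rabs (s - s0))).
  - apply (continuity_pt_comp (fun s => s - s0) Rabs).
    exact (continuity_pt_minus _ _ _ (derivable_continuous_pt _ _ (derivable_pt_id s0)) (continuity_pt_const (fun _ => s0) s0 (fun a b => eq_refl))).
    apply Rcontinuity_abs.
  - rewrite Rminus_diag. apply Rabs_R0.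
  - intros s. unfold Rmax. destruct (Rle_dec 0 s); destruct (Rle_dec 0 s0);
    unfold Rabs; repeat match goal with |- context[Rcase_abs ?x] => destruct (Rcase_abs x) end; lra.
Qed.

Lemma deriv_sumR k (f : nat -> R -> R) (f' : nat -> R) c :
  (forall i, (i<k)%nat -> derivable_pt_lim (f i) c (f' i)) ->
  derivable_pt_lim (fun s => sumR k (fun i => f i s)) c (sumR k f').
Proof. induction k; simpl; intros H.
 - exact (derivable_pt_lim_const 0 c).
 - exact (derivable_pt_lim_plus _ _ _ _ _ (IHk (fun i Hi => H i ltac:(lia))) (H k ltac:(lia))).
Qed.

Lemma deriv_mulc f l a c : derivable_pt_lim f c l -> derivable_pt_lim (fun s => f s * a) c (l * a).
Proof. intros H. assert (H2 := derivable_pt_lim_mult f (fun _ => a) c l 0 H (derivable_pt_lim_const a c)).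
  replace (l * a) with (l * (fun _ => a) c + f c * 0) by ring. exact H2. Qed.

Lemma deriv_sq f l c : derivable_pt_lim f c l -> derivable_pt_lim (fun s => f s * f s) c (2 * f c * l).
Proof. intros H. assert (H2 := derivable_pt_lim_mult f f c l l H H).
  replace (2 * f c * l) with (l * f c + f c * l) by ring. exact H2. Qed.

Lemma cont_pow2_diff (f : R -> R) s0 : continuity_pt f s0 ->
  continuity_pt (fun s => (f s - f s0) ^ 2) s0.
Proof. intros H.
  assert (H1 : continuity_pt (fun s => f s - f s0) s0).
  { exact (continuity_pt_minus _ _ _ H (continuity_pt_const (fun _ => f s0) s0 (fun a b => eq_refl))). }
  exact (continuity_pt_mult _ _ _ H1 (continuity_pt_mult _ _ _ H1 (continuity_pt_const (fun _ => 1) s0 (fun a b => eq_refl)))).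
Qed.

Lemma norm_vsub0 k u : norm k (vsub zero_vec u) = norm k u.
Proof. unfold norm, ip, vsub, zero_vec. f_equal. apply sumR_ext; intros; ring. Qed.

Theorem lemma2p6
  (n m : nat)
  (F : vec -> vec)               (* F = (f,g) : first n components f, next m components g *)
  (DF : vec -> mat)              (* total derivative of F *)
  (U Gamma : vec -> Prop)
  (alpha ell : vec -> R) (c1 : R)
  (Phi : R -> vec -> vec)        (* flow *)
  (Q : R -> vec -> mat)          (* fundamental matrix of the variational equation *)
  (* Hypothesis 1 *)
  (HUopen : is_open (n + m) U)
  (HUconv : is_convex U)
  (H1 : exists d, d > 0 /\ forall x x', U x -> U x' -> Ccone n m x x' -> Bd n m d x x')
  (* Hypothesis 2: f, g are C^1 on U *)
  (HDF : frechet_on (n + m) U F DF)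
  (HDFcont : forall i j, (i < n + m)%nat -> (j < n + m)%nat -> cont_on (n + m) U (fun y => DF y i j))
  (Halpha_cont : cont_on (n + m) U alpha)
  (Hell_cont : cont_on (n + m) U ell)
  (Halpha_pos : forall x, U x -> alpha x > 0)
  (Hell_nonneg : forall x, U x -> ell x >= 0)
  (Hc1 : c1 > 0)
  (H2a : forall x, U x -> forall a' : vec,
      ip n a' (matvec n (Daf DF x) a') >= alpha x * (norm n a') ^ 2)
  (H2z : forall x, U x -> forall z' : vec,
      ip m z' (matvec m (Dzg n DF x) z') <= ell x * (norm m z') ^ 2)
  (H2c : forall x, U x ->
      alpha x >= ell x + opnorm n m (Dzf n DF x) + opnorm m n (Dag n DF x) + c1)
  (* Hypothesis 3 *)
  (HGU : forall x, Gamma x -> U x)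
  (HPhi0 : forall x, Gamma x -> forall i, (i < n + m)%nat -> Phi 0 x i = x i)
  (HPhi_ode : forall x, Gamma x -> forall t, t >= 0 -> forall i, (i < n + m)%nat ->
      derivable_pt_lim (fun s => Phi s x i) t (F (Phi t x) i))
  (HGinv : forall x, Gamma x -> forall t, t >= 0 -> Gamma (Phi t x))
  (HGproj1 : forall x, Gamma x -> exists u, U u /\ forall i, (i < m)%nat -> u (n + i)%nat = x (n + i)%nat)
  (HGproj2 : forall u, U u -> exists x, Gamma x /\ forall i, (i < m)%nat -> x (n + i)%nat = u (n + i)%nat)
  (* Q(t,x) : fundamental matrix, Q(0,x) = I, d/dt Q = DF(Phi(t,x)) Q *)
  (HQ0 : forall x, Gamma x -> forall i j, (i < n + m)%nat -> (j < n + m)%nat ->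
      Q 0 x i j = if Nat.eqb i j then 1 else 0)
  (HQ_ode : forall x, Gamma x -> forall t, t >= 0 -> forall i j, (i < n + m)%nat -> (j < n + m)%nat ->
      derivable_pt_lim (fun s => Q s x i j) t (matmul (n + m) (DF (Phi t x)) (Q t x) i j)) :
  forall x, Gamma x -> forall v : vec,
    (* v in T(x) *)
    (forall t, t >= 0 -> Lf n m (matvec (n + m) (Q t x) v) zero_vec <= 0) ->
    forall t, t >= 0 ->
      exists pr : Riemann_integrable
          (fun s => opnorm m n (Dag n DF (Phi s x)) + ell (Phi s x)) 0 t,
        norm (n + m) (matvec (n + m) (Q t x) v)
          <= 2 * norm (n + m) v * exp (RiemannInt pr).
Proof.
  intros x Hx v HT t Ht.
  assert (Ht' : 0 <= t) by lra.
  set (P := fun s => Phi (Rmax 0 s) x).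
  assert (HPG : forall s, Gamma (P s)) by (intros; apply HGinv; auto; apply Rle_ge, Rmax_l).
  assert (HPU : forall s, U (P s)) by (intros; apply HGU; auto).
  assert (HPc : forall s0 i, (i < n+m)%nat -> continuity_pt (fun s => P s i) s0).
  { intros s0 i Hi.
    assert (Hd : derivable_pt (fun u => Phi u x i) (Rmax 0 s0)).
    { exists (F (Phi (Rmax 0 s0) x) i). apply HPhi_ode; auto. apply Rle_ge, Rmax_l. }
    exact (continuity_pt_comp (fun s => Rmax 0 s) (fun u => Phi u x i) s0 (cont_Rmax0 s0)
             (derivable_continuous_pt _ _ Hd)). }
  set (kk := fun s => opnorm m n (Dag n DF (P s)) + ell (P s)).
  assert (Hkk : forall s0, continuity_pt kk s0).
  { intros s0. unfold kk.
    apply continuity_pt_plus.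
    2:{ exact (cont_comp_vec (n+m) U ell P s0 HPU (HPc s0) Hell_cont). }
    apply (cont_bound _ (fun s => dfrob m n (Dag n DF (P s)) (Dag n DF (P s0)))).
    - unfold dfrob, frob. apply cont_sqrt_comp.
      + apply (cont_sumR m (fun i s => sumR n (fun j => (Dag n DF (P s) i j - Dag n DF (P s0) i j) ^ 2))).
        intros i Hi.
        apply (cont_sumR n (fun j s => (Dag n DF (P s) i j - Dag n DF (P s0) i j) ^ 2)).
        intros j Hj. apply (cont_pow2_diff (fun s => DF (P s) (n+i)%nat j)).
        apply (cont_comp_vec (n+m) U (fun y => DF y (n+i)%nat j) P s0 HPU (HPc s0)).
        apply HDFcont; lia.
      + apply sumR_nonneg; intros; apply sumR_nonneg; intros. apply pow2_ge_0.
    - unfold dfrob, frob. rewrite (sumR_ext _ _ (fun _ => 0)). rewrite sumR_0; apply sqrt_0.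
      intros i Hi. rewrite (sumR_ext _ _ (fun _ => 0)). apply sumR_0. intros; ring.
    - intros s. pose proof (opnorm_lip m n (Dag n DF (P s)) (Dag n DF (P s0))).
      pose proof (opnorm_lip m n (Dag n DF (P s0)) (Dag n DF (P s))).
      rewrite dfrob_sym in H0. unfold Rabs; destruct Rcase_abs; lra. }
  assert (C0 : forall y, 0 <= y <= t -> continuity_pt kk y) by (intros; apply Hkk).
  set (K := primitive Ht' (FTC_P1 Ht' C0)).
  assert (HK' : forall c, 0 <= c <= t -> derivable_pt_lim K c (kk c)).
  { intros c Hc. apply RiemannInt_P28; auto. }
  set (q := fun s => matvec (n+m) (Q s x) v).
  set (S := fun s => sumR m (fun i => q s (n+i)%nat * q s (n+i)%nat)).
  set (dq := fun c i => sumR (n+m) (fun l => matmul (n+m) (DF (Phi c x)) (Q c x) (n+i)%nat l * v l)).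
  assert (DS : forall c, 0 <= c -> derivable_pt_lim S c (sumR m (fun i => 2 * q c (n+i)%nat * dq c i))).
  { intros c Hc. unfold S.
    apply (deriv_sumR m (fun i s => q s (n+i)%nat * q s (n+i)%nat)). intros i Hi.
    apply (deriv_sq (fun s => q s (n+i)%nat)). unfold q, matvec, dq.
    apply (deriv_sumR (n+m) (fun l s => Q s x (n+i)%nat l * v l)). intros l Hl.
    apply (deriv_mulc (fun s => Q s x (n+i)%nat l)). apply HQ_ode; auto; try lra; lia. }
  assert (Tle : forall c, 0 <= c -> norm n (q c) <= norm m (proj_z n (q c))).
  { intros c Hc. assert (H := HT c ltac:(lra)). unfold Lf in H.
    assert (E1 : norm n (proj_a (vsub zero_vec (q c))) = norm n (q c)) by apply norm_vsub0.
    assert (E2 : norm m (proj_z n (vsub zero_vec (q c))) = norm m (proj_z n (q c))) by apply (norm_vsub0 m (proj_z n (q c))).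
    change (matvec (n+m) (Q c x) v) with (q c) in H. rewrite E1, E2 in H.
    pose proof (norm_nonneg n (q c)). pose proof (norm_nonneg m (proj_z n (q c))). nra. }
  assert (Key : forall c, 0 <= c -> sumR m (fun i => q c (n+i)%nat * dq c i) <= kk c * S c).
  { intros c Hc.
    set (z := proj_z n (q c)).
    set (a1 := matvec n (Dag n DF (Phi c x)) (q c)).
    set (a2 := matvec m (Dzg n DF (Phi c x)) z).
    assert (Edq : forall i, (i < m)%nat -> dq c i = a1 i + a2 i).
    { intros i Hi. unfold dq, matmul, a1, a2, matvec, Dag, Dzg, z, proj_z.
      rewrite (sumR_ext _ _ (fun l => sumR (n+m) (fun k => DF (Phi c x) (n+i)%nat k * Q c x k l * v l))).
      2:{ intros l Hl. rewrite Rmult_comm, <- sumR_scal. apply sumR_ext; intros; ring. }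
      rewrite sumR_swap.
      rewrite (sumR_ext _ _ (fun k => DF (Phi c x) (n+i)%nat k * q c k)).
      2:{ intros k Hk. unfold q, matvec. rewrite <- sumR_scal. apply sumR_ext; intros; ring. }
      rewrite sumR_split. reflexivity. }
    rewrite (sumR_ext _ _ (fun i => z i * a1 i + z i * a2 i)).
    2:{ intros i Hi. rewrite Edq by auto. unfold z, proj_z. ring. }
    rewrite sumR_plus. fold (ip m z a1). fold (ip m z a2).
    assert (HS : S c = norm m z ^ 2) by (rewrite norm_sq; reflexivity).
    assert (HP : P c = Phi c x) by (unfold P; rewrite Rmax_right; auto).
    unfold kk. rewrite HP, HS.
    assert (HC := CS m z a1).
    assert (HB := opnorm_bound m n (Dag n DF (Phi c x)) (q c)). fold a1 in HB.
    assert (HT1 := Tle c Hc). fold z in HT1.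
    assert (HZ := H2z (Phi c x) (HGU _ (HGinv x Hx c ltac:(lra))) z). fold a2 in HZ.
    assert (Ho := opnorm_nonneg m n (Dag n DF (Phi c x))).
    assert (Hnz := norm_nonneg m z).
    assert (Ha1 : norm m a1 <= opnorm m n (Dag n DF (Phi c x)) * norm m z).
    { apply Rle_trans with (opnorm m n (Dag n DF (Phi c x)) * norm n (q c)); auto.
      apply Rmult_le_compat_l; auto. }
    assert (Hz1 : norm m z * norm m a1 <= norm m z * (opnorm m n (Dag n DF (Phi c x)) * norm m z)).
    { apply Rmult_le_compat_l; auto. }
    replace ((opnorm m n (Dag n DF (Phi c x)) + ell (Phi c x)) * norm m z ^ 2) with
      (norm m z * (opnorm m n (Dag n DF (Phi c x)) * norm m z) + ell (Phi c x) * norm m z ^ 2) by ring.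
    lra. }
  set (h := fun s => S s * exp (-2 * K s)).
  assert (Hh : h t <= h 0).
  { destruct (Rle_lt_or_eq_dec 0 t Ht') as [Hlt|Heq].
    2:{ rewrite <- Heq. lra. }
    destruct (MVT_cor2 h (fun c => sumR m (fun i => 2 * q c (n+i)%nat * dq c i) * exp (-2 * K c)
                + S c * (exp (-2 * K c) * (-2 * kk c))) 0 t Hlt) as [c [Hc1' Hc2]].
    - intros c Hc. unfold h.
      apply (derivable_pt_lim_mult S (fun s => exp (-2 * K s))). apply DS; lra.
      apply (derivable_pt_lim_comp (fun s => -2 * K s) exp c (-2 * kk c)).
      apply (derivable_pt_lim_scal K (-2) c). apply HK'; auto.
      apply derivable_pt_lim_exp.
    - assert (Hk := Key c ltac:(lra)).
      rewrite (sumR_ext _ _ (fun i => 2 * (q c (n+i)%nat * dq c i))) in Hc1' by (intros; ring).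
      rewrite sumR_scal in Hc1'.
      pose proof (exp_pos (-2 * K c)) as HE.
      set (Sg := sumR m (fun i => q c (n + i)%nat * dq c i)) in *.
      set (E := exp (-2 * K c)) in *.
      assert (Hd : 2 * Sg * E + S c * (E * (-2 * kk c)) = 2 * E * (Sg - kk c * S c)) by ring.
      rewrite Hd in Hc1'.
      assert (H3 : 2 * E * (Sg - kk c * S c) <= 0).
      { assert (Sg - kk c * S c <= 0) by lra. assert (0 < 2 * E) by lra.
        apply Rmult_le_reg_l with (/ (2*E)). apply Rinv_0_lt_compat; lra.
        rewrite <- Rmult_assoc, Rinv_l by lra. lra. }
      assert (H4 : 2 * E * (Sg - kk c * S c) * (t - 0) <= 0).
      { replace (2 * E * (Sg - kk c * S c) * (t - 0)) with (- (-(2 * E * (Sg - kk c * S c)) * t)) by ring.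
        assert (0 <= -(2 * E * (Sg - kk c * S c)) * t) by (apply Rmult_le_pos; lra). lra. }
      lra. }
  assert (K0 : K 0 = 0).
  { unfold K, primitive. destruct (Rle_dec 0 0); [|lra]. destruct (Rle_dec 0 t); [|lra]. apply RiemannInt_P9. }
  assert (S0 : S 0 <= norm (n+m) v ^ 2).
  { rewrite norm_sq. unfold S, q, ip. rewrite sumR_split.
    rewrite (sumR_ext m _ (fun i => v (n+i)%nat * v (n+i)%nat)).
    2:{ intros i Hi. unfold matvec.
        rewrite (sumR_ext _ _ (fun j => (if Nat.eqb (n+i)%nat j then 1 else 0) * v j)).
        rewrite sumR_delta by lia. auto.
        intros j Hj. rewrite HQ0; auto; lia. }
    assert (0 <= sumR n (fun i => v i * v i)) by (apply sumR_nonneg; intros; nra). lra. }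
  assert (prkk : Riemann_integrable kk 0 t) by (apply continuity_implies_RiemannInt; auto).
  assert (Hext : forall y, Rmin 0 t <= y <= Rmax 0 t ->
     kk y = (fun s => opnorm m n (Dag n DF (Phi s x)) + ell (Phi s x)) y).
  { intros y Hy. rewrite Rmin_left, Rmax_right in Hy by lra.
    unfold kk, P. rewrite Rmax_right by lra. auto. }
  pose proof (@Riemann_integrable_ext kk _ 0 t Hext prkk) as pr.
  exists pr.
  assert (EK : RiemannInt pr = K t).
  { unfold K, primitive. destruct (Rle_dec 0 t); [|lra]. destruct (Rle_dec t t); [|lra].
    apply RiemannInt_P18; auto. intros y Hy. unfold kk, P. rewrite Rmax_right by lra. auto. }
  rewrite EK.
  unfold h in Hh. rewrite K0 in Hh. replace (-2 * 0) with 0 in Hh by ring. rewrite exp_0 in Hh.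
  assert (E2 : exp (-2 * K t) * exp (K t) ^ 2 = 1).
  { replace (exp (K t) ^ 2) with (exp (2 * K t)) by (simpl; rewrite Rmult_1_r, <- exp_plus; f_equal; ring).
    rewrite <- exp_plus. replace (-2 * K t + 2 * K t) with 0 by ring. apply exp_0. }
  assert (St : S t <= S 0 * exp (K t) ^ 2).
  { pose proof (pow2_ge_0 (exp (K t))).
    apply Rmult_le_compat_r with (r := exp (K t) ^ 2) in Hh; auto.
    replace (S t * exp (-2 * K t) * exp (K t) ^ 2) with (S t) in Hh by (rewrite Rmult_assoc, E2; ring). lra. }
  assert (At : ip n (q t) (q t) <= S t).
  { rewrite <- norm_sq. pose proof (Tle t Ht'). pose proof (norm_nonneg n (q t)).
    assert (S t = norm m (proj_z n (q t)) ^ 2) by (rewrite norm_sq; reflexivity). nra. }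
  fold (q t). unfold norm at 1. unfold ip at 1. rewrite sumR_split. fold (ip n (q t) (q t)).
  change (sumR m (fun i => q t (n + i)%nat * q t (n + i)%nat)) with (S t).
  pose proof (norm_nonneg (n+m) v). pose proof (exp_pos (K t)).
  rewrite <- (sqrt_pow2 (2 * norm (n+m) v * exp (K t))) by (apply Rmult_le_pos; nra).
  apply sqrt_le_1_alt.
  assert (S 0 * exp (K t) ^ 2 <= norm (n+m) v ^ 2 * exp (K t) ^ 2).
  { apply Rmult_le_compat_r; auto. apply pow2_ge_0. }
  nra.
Qed.
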